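(* Let $G$ be a graph, $k \ge \gamma(G)$ an integer, and let $A$ and $B$ be dominating sets of $G$ with $|A| = |B| = k$. Then $A$ and $B$ are joined by a path in $D_{k+1}(G)$ if and only if $A$ and $B$ are joined by a path in $X_k(G)$.
   Context: All graphs are finite and simple. A set $S \subseteq V(G)$ is a dominating set of $G$ if every vertex of $V(G)\setminus S$ is adjacent to a vertex of $S$. $\gamma(G)$ is the minimum cardinality of a dominating set of $G$. For an integer $k \ge \gamma(G)$, the $k$-dominating graph $D_k(G)$ is the graph whose vertices are the dominating sets of $G$ of cardinality at most $k$, with two such sets $A,B$ adjacent if and only if their symmetric difference $(A\setminus B)\cup(B\setminus A)$ consists of exactly one vertex of $G$. $X_k(G)$ is the graph whose vertices are the dominating sets of $G$ of cardinality exactly $k$, with two such sets $S,T$ adjacent if and only if there exist $s \in S$ and $t \in T$ with $T = (S\setminus\{s\})\cup\{t\}$ (and $S \neq T$). *)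

(* Defs.v *)
From mathcomp Require Import all_boot.
Set Implicit Arguments. Unset Strict Implicit. Unset Printing Implicit Defensive.

Definition simple_graph (T : finType) (e : rel T) : Prop :=
  symmetric e /\ irreflexive e.

Definition dominating (T : finType) (e : rel T) (S : {set T}) : bool :=
  [forall v, (v \notin S) ==> [exists u in S, e v u]].

Lemma dominating_setT (T : finType) (e : rel T) : dominating e [set: T].
Proof. by apply/forallP => v; rewrite in_setT. Qed.

Definition gamma (T : finType) (e : rel T) : nat :=
  #|[arg min_(S < [set: T] | dominating e S) #|S|]|.

Definition Dk_adj (T : finType) (e : rel T) (k : nat) : rel {set T} :=
  fun A B => [&& dominating e A, #|A| <= k, dominating e B, #|B| <= k &
     [exists x, (A :\: B) :|: (B :\: A) == [set x]]].

Definition Xk_adj (T : finType) (e : rel T) (k : nat) : rel {set T} :=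
  fun A B => [&& dominating e A, #|A| == k, dominating e B, #|B| == k,
     A != B & [exists s in A, exists t, B == (A :\ s) :|: [set t]]].

(* Main.v *)
Require Import Defs.
From mathcomp Require Import all_boot.
Set Implicit Arguments. Unset Strict Implicit. Unset Printing Implicit Defensive.

Section H.
Variables (T : finType) (e : rel T).

Lemma dom_sup (S S' : {set T}) : dominating e S -> S \subset S' -> dominating e S'.
Proof.
move=> /forallP H sub; apply/forallP=> v; apply/implyP=> hv.
have hvS : v \notin S by apply: contra hv => /(subsetP sub).
have /existsP[u /andP[uS euv]] := implyP (H v) hvS.
by apply/existsP; exists u; rewrite (subsetP sub u uS).
Qed.

Lemma symdiff1 (A B : {set T}) x : (A :\: B) :|: (B :\: A) = [set x] ->
  (x \notin A /\ B = x |: A) \/ (x \notin B /\ A = x |: B).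
Proof.
move=> H; move/setP: (H) => Hs; have Hx := Hs x; rewrite !inE eqxx in Hx.
case xA: (x \in A); case xB: (x \in B); rewrite xA xB /= in Hx => //.
- right; split => //; apply/setP => y; have Hy := Hs y; rewrite !inE in Hy *.
  case: (eqVneq y x) Hy => [->|ne]; first by rewrite xA.
  by case: (y \in A); case: (y \in B).
- left; split => //; apply/setP => y; have Hy := Hs y; rewrite !inE in Hy *.
  case: (eqVneq y x) Hy => [->|ne]; first by rewrite xB.
  by case: (y \in A); case: (y \in B).
Qed.

Lemma extend n (S : {set T}) k : n + #|S| = k -> k <= #|[set: T]| ->
  exists K : {set T}, S \subset K /\ #|K| = k.
Proof.
elim: n S => [|n IH] S hn hk; first by exists S; rewrite -hn.
have : 0 < #|~: S|.
  have := cardsC S; move: hk; rewrite cardsT -hn => hk hc; rewrite -hc in hk.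
  by rewrite addSn addnC -addnS leq_add2l in hk; apply: leq_trans hk.
rewrite card_gt0 => /set0Pn[x]; rewrite inE => xS.
have e1 : n + #|x |: S| = k by rewrite cardsU1 xS add1n addnS -addSn.
have [K [sK cK]] := IH (x |: S) e1 hk.
exists K; split => //; apply: subset_trans sK; exact: subsetU1.
Qed.

Variable k : nat.

Lemma swapL n (K1 K2 : {set T}) : #|K1 :\: K2| = n -> #|K1| = k -> #|K2| = k ->
  dominating e (K1 :&: K2) -> connect (Xk_adj e k) K1 K2.
Proof.
elim: n K1 => [|n IH] K1 hn h1 h2 hd.
  have : K1 \subset K2 by rewrite -setD_eq0 -cards_eq0 hn.
  move=> sub; have -> : K1 = K2 by apply/eqP; rewrite eqEcard sub h1 h2 leqnn.
  exact: connect0.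
have /set0Pn[a] : K1 :\: K2 != set0 by rewrite -card_gt0 hn.
rewrite inE => /andP[aK2 aK1].
have : 0 < #|K2 :\: K1| by rewrite cardsD setIC h2 -h1 -cardsD hn.
rewrite card_gt0 => /set0Pn[b]; rewrite inE => /andP[bK1 bK2].
set K' := (K1 :\ a) :|: [set b].
have cK' : #|K'| = k.
  rewrite /K' setUC cardsU1 !inE (negbTE bK1) andbF /=.
  by rewrite -h1 (cardsD1 a K1) aK1.
have sub : K1 :&: K2 \subset K'.
  apply/subsetP => y; rewrite !inE => /andP[yK1 yK2].
  by rewrite yK1 andbT; apply/orP; left; apply: contraNneq aK2 => <-.
have dK1 : dominating e K1 by apply: dom_sup hd (subsetIl _ _).
have dK' : dominating e K' by apply: dom_sup hd sub.
apply: (@connect_trans _ _ K').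
  apply: connect1; rewrite /Xk_adj dK1 h1 eqxx dK' cK' eqxx /=.
  apply/andP; split.
    by apply/eqP => E; move: bK1; rewrite E !inE eqxx orbT.
  by apply/existsP; exists a; rewrite aK1 /=; apply/existsP; exists b.
apply: IH => //.
  have EE : K' :\: K2 = (K1 :\: K2) :\ a.
    apply/setP=> y; rewrite !inE; case: (eqVneq y b) => [->|_]; first by rewrite bK2 !andbF.
    by rewrite orbF; case: (y \in K2); case: (y \in K1); case: (y != a).
  by move: hn; rewrite (cardsD1 a) !inE aK1 aK2 EE add1n => -[].
apply: dom_sup hd _; apply/subsetP => y; rewrite !inE => /andP[yK1 yK2].
by rewrite yK2 andbT; apply/orP; left; rewrite yK1 andbT; apply: contraNneq aK2 => <-.
Qed.
End H.

Section M.
Variables (T : finType) (e : rel T) (k : nat) (A : {set T}).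
Hypothesis hkT : k <= #|[set: T]|.

Definition Inv (S : {set T}) := exists K : {set T}, [/\ dominating e K, #|K| = k,
  connect (Xk_adj e k) A K & (if #|S| <= k then S \subset K else K \subset S)].

Lemma inv_step S S' : Dk_adj e k.+1 S S' -> Inv S -> Inv S'.
Proof.
case/and5P => dS cS dS' cS' /existsP[x /eqP /symdiff1 [[xS E]|[xS' E]]] [K [dK cK cAK hK]].
- have cE : #|S'| = #|S|.+1 by rewrite E cardsU1 xS.
  have sSS' : S \subset S' by rewrite E subsetU1.
  have hS : #|S| <= k by rewrite -ltnS -cE.
  rewrite hS in hK.
  case: (leqP #|S'| k) => hS'.
  + have [K' [sK' cK']] := @extend T (k - #|S'|) S' k (subnK hS') hkT.
    exists K'; split => //.
    * exact: dom_sup dS' sK'.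
    * apply: connect_trans cAK _; apply: (@swapL T e k _ K K' erefl) => //.
      apply: dom_sup dS _; rewrite subsetI hK; exact: subset_trans sSS' sK'.
    * by rewrite hS'.
  + have eSK : S = K by apply/eqP; rewrite eqEcard hK cK -ltnS -cE.
    exists K; split => //; rewrite leqNgt hS' /= -eSK //.
- have cE : #|S| = #|S'|.+1 by rewrite E cardsU1 xS'.
  have sSS' : S' \subset S by rewrite E subsetU1.
  case: (leqP #|S| k) => hS.
  + rewrite hS in hK; exists K; split => //.
    by rewrite (leq_trans _ hS) ?cE //; apply: subset_trans hK.
  + rewrite leqNgt hS /= in hK.
    have cS'k : #|S'| = k by apply/eqP; rewrite eqn_leq -ltnS -cE cS -ltnS -cE hS.
    exists S'; split => //; last by rewrite cS'k leqnn subxx.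
    apply: connect_trans cAK _.
    case: (eqVneq K S') => [->|neq]; first exact: connect0.
    apply: connect1.
    have xK : x \in K.
      apply: contraTT neq => xK; rewrite negbK eqEcard cK cS'k leqnn andbT.
      apply/subsetP => y yK; have := subsetP hK y yK; rewrite E !inE.
      by case/orP => // /eqP Ey; rewrite -Ey yK in xK.
    have : #|S :\: K| == 1 by rewrite cardsD (setIidPr hK) cE cS'k cK subSnn.
    case/cards1P => y Ey.
    have yS : y \in S :\: K by rewrite Ey set11.
    move: yS; rewrite inE => /andP[yK yS].
    have yx : y != x by apply: contraNneq yK => ->.
    rewrite /Xk_adj dK cK eqxx dS' cS'k eqxx neq /=.
    apply/existsP; exists x; rewrite xK /=; apply/existsP; exists y.
    apply/eqP/setP => z; rewrite !inE.
    have Hz := (setP _ _).2 Ey z; rewrite !inE in Hz.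
    have Hz2 := (setP _ _).2 E z; rewrite !inE in Hz2.
    have zKS : z \in K -> z \in S := subsetP hK z.
    case: (eqVneq z x) Hz Hz2 zKS => [->|zx].
      by rewrite xK (negbTE xS') eq_sym (negbTE yx).
    case: (eqVneq z y) => [->|zy].
      by rewrite (negbTE yK) yS.
    rewrite /= ?orbF; case: (z \in K); case: (z \in S); case: (z \in S') => //=; by move=> _ _ /(_ isT).
Qed.

Lemma inv_path p S : path (Dk_adj e k.+1) S p -> Inv S -> Inv (last S p).
Proof.
elim: p S => [|S1 p IH] S //= /andP[h hp] inv; apply: IH hp _; exact: inv_step h inv.
Qed.
End M.

Lemma X_to_D (T : finType) (e : rel T) (k : nat) (S S' : {set T}) :
  Xk_adj e k S S' -> connect (Dk_adj e k.+1) S S'.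
Proof.
case/and5P => dS /eqP cS dS' /eqP cS' /andP[neq /existsP[s /andP[sS /existsP[t /eqP E]]]].
have tS : t \notin S.
  apply: contra neq => tS; rewrite eq_sym eqEcard cS cS' leqnn andbT E.
  by apply/subsetP => y; rewrite !inE => /orP[/andP[_ ->]|/eqP ->].
have ts : t != s by apply: contraNneq tS => ->.
set M := t |: S.
have cM : #|M| = k.+1 by rewrite cardsU1 tS cS.
have dM : dominating e M by apply: dom_sup dS (subsetU1 _ _).
apply: (@connect_trans _ _ M); apply: connect1.
  rewrite /Dk_adj dS cS leqnSn dM cM leqnn /=; apply/existsP; exists t.
  apply/eqP/setP => y; rewrite !inE.
  case: (eqVneq y t) => [->|]; first by rewrite (negbTE tS).
  by case: (y \in S).
rewrite /Dk_adj dM cM leqnn dS' cS' leqnSn /=; apply/existsP; exists s.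
apply/eqP/setP => y; rewrite E !inE.
case: (eqVneq y s) => [->|ys]; first by rewrite sS (eq_sym s t) (negbTE ts).
case: (eqVneq y t) => [->|yt] /=; first by rewrite (negbTE tS).
by case: (y \in S).
Qed.

Theorem lemma11 (T : finType) (e : rel T) (k : nat) (A B : {set T}) :
  simple_graph e -> gamma e <= k ->
  dominating e A -> dominating e B -> #|A| = k -> #|B| = k ->
  connect (Dk_adj e k.+1) A B <-> connect (Xk_adj e k) A B.
Proof.
move=> _ _ dA dB cA cB; split; last first.
  by apply: connect_sub => S S'; apply: X_to_D.
have hkT : k <= #|[set: T]| by rewrite -cA subset_leq_card // subsetT.
case/connectP => p hp EB.
have inv0 : Inv e k A A by exists A; split; rewrite ?cA ?leqnn ?subxx //; apply: connect0.
have [K [dK cK cAK]] := inv_path hkT hp inv0.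
rewrite -EB cB leqnn => sBK.
have -> : B = K by apply/eqP; rewrite eqEcard sBK cK cB leqnn.
exact: cAK.
Qed.
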